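(* For all $n\in\mathbb{N}\cup\{0\}$ and $x\in\mathbb{R}$, the physicist's Hermite polynomials satisfy $$|H_n(x)|\le\begin{cases}n^{n/2}(4\sqrt2)^n\left(1+\frac n2\right),&\text{if }|x|\le\sqrt{2n},\\ 2^{2n}|x|^n\left(1+\frac n2\right),&\text{if }|x|>\sqrt{2n},\end{cases}$$ where $0^0:=1$. In particular, $$|H_n(x)|\le4^n\left(1+\frac n2\right)\left(2^{n/2}n^{n/2}+|x|^n\right).$$
   Context: $H_n$ denotes the $n$-th physicist's Hermite polynomial, $H_n(x)=\sum_{m=0}^{\lfloor n/2\rfloor}\frac{(-1)^m n!}{m!(n-2m)!}(2x)^{n-2m}$. *)

(* Defs.v *)
From Stdlib Require Import Reals Lra Lia Arith Factorial.
Open Scope R_scope.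

Definition hermite (n : nat) (x : R) : R :=
  sum_f_R0 (fun m => (-1) ^ m * INR (fact n) / (INR (fact m) * INR (fact (n - 2 * m)))
                     * (2 * x) ^ (n - 2 * m)) (Nat.div2 n).

(* Main.v *)
Require Import Defs.
From Stdlib Require Import Reals.
From Stdlib Require Import Lra Lia Arith Factorial.
Open Scope R_scope.

Lemma fact_pos_R k : 0 < INR (fact k).
Proof. apply lt_0_INR, lt_O_fact. Qed.

Lemma C_le n : forall i, (i <= n)%nat -> C n i <= 2 ^ n.
Proof.
  induction n as [|n IH]; intros i Hi.
  - assert (i = 0%nat) by lia; subst. unfold C; simpl; lra.
  - destruct i as [|i].
    + unfold C. rewrite Nat.sub_0_r. simpl (fact 0). simpl (INR 1).
      pose proof (fact_pos_R (S n)).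
      replace (INR (fact (S n)) / (1 * INR (fact (S n)))) with 1 by (field; lra).
      apply pow_R1_Rle; lra.
    + destruct (Nat.eq_dec i n) as [->|Hne].
      * unfold C. rewrite Nat.sub_diag. simpl (fact 0). simpl (INR 1).
        pose proof (fact_pos_R (S n)).
        replace (INR (fact (S n)) / (INR (fact (S n)) * 1)) with 1 by (field; lra).
        apply pow_R1_Rle; lra.
      * rewrite <- pascal by lia.
        pose proof (IH i ltac:(lia)). pose proof (IH (S i) ltac:(lia)).
        simpl; lra.
Qed.

Lemma C_ge0 n i : 0 <= C n i.
Proof.
  unfold C. apply Rmult_le_pos; [apply pos_INR|].
  left; apply Rinv_0_lt_compat, Rmult_lt_0_compat; apply fact_pos_R.
Qed.

Lemma fact_le m k : (fact (m + k) <= fact m * (m + k) ^ k)%nat.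
Proof.
  induction k as [|k IH].
  - rewrite Nat.add_0_r; simpl; lia.
  - rewrite Nat.add_succ_r. change (fact (S (m + k))) with (S (m + k) * fact (m + k))%nat.
    assert (H2: ((m + k) ^ k <= S (m + k) ^ k)%nat) by (apply Nat.pow_le_mono_l; lia).
    change (S (m + k) ^ S k)%nat with (S (m + k) * S (m + k) ^ k)%nat.
    assert (fact m * (m + k) ^ k <= fact m * S (m + k) ^ k)%nat by (apply Nat.mul_le_mono_l; exact H2).
    nia.
Qed.

Lemma coef_le n m : (2 * m <= n)%nat ->
  INR (fact n) / (INR (fact m) * INR (fact (n - 2 * m))) <= 2 ^ n * INR n ^ m.
Proof.
  intros Hm.
  pose proof (fact_pos_R m). pose proof (fact_pos_R (2*m)). pose proof (fact_pos_R (n - 2*m)).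
  replace (INR (fact n) / (INR (fact m) * INR (fact (n - 2 * m))))
    with (C n (2 * m) * (INR (fact (2 * m)) / INR (fact m))) by (unfold C; field; lra).
  apply Rmult_le_compat.
  - apply C_ge0.
  - apply Rmult_le_pos; [lra| left; apply Rinv_0_lt_compat; lra].
  - apply C_le; lia.
  - assert (Hn: (fact (2 * m) <= fact m * n ^ m)%nat).
    { replace (2 * m)%nat with (m + m)%nat by lia.
      eapply Nat.le_trans; [apply fact_le|].
      apply Nat.mul_le_mono_l, Nat.pow_le_mono_l; lia. }
    apply le_INR in Hn. rewrite mult_INR, pow_INR in Hn.
    apply (Rmult_le_reg_r (INR (fact m))); [lra|].
    unfold Rdiv; rewrite Rmult_assoc, Rinv_l by lra. lra.
Qed.

Lemma term_le n m x : (2 * m <= n)%nat ->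
  Rabs ((-1) ^ m * INR (fact n) / (INR (fact m) * INR (fact (n - 2 * m)))
                     * (2 * x) ^ (n - 2 * m))
  <= 4 ^ n * sqrt (INR n) ^ (2 * m) * Rabs x ^ (n - 2 * m).
Proof.
  intros Hm.
  pose proof (fact_pos_R n). pose proof (fact_pos_R m). pose proof (fact_pos_R (n - 2*m)).
  unfold Rdiv. rewrite !Rabs_mult, pow_1_abs, <- RPow_abs, Rabs_mult, Rpow_mult_distr.
  rewrite (Rabs_right 2) by lra.
  rewrite (Rabs_right (INR (fact n))) by lra.
  rewrite (Rabs_right (/ _)) by (left; apply Rinv_0_lt_compat, Rmult_lt_0_compat; lra).
  rewrite pow_mult, <- (Rsqr_pow2 (sqrt _)), Rsqr_sqrt by apply pos_INR.
  pose proof (coef_le n m Hm) as Hc. unfold Rdiv in Hc.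
  assert (H2: 2 ^ (n - 2 * m) <= 2 ^ n) by (apply Rle_pow; [lra|lia]).
  replace (4 ^ n) with (2 ^ n * 2 ^ n) by (rewrite <- Rpow_mult_distr; f_equal; lra).
  assert (0 <= Rabs x ^ (n - 2 * m)) by (apply pow_le, Rabs_pos).
  assert (0 <= INR n ^ m) by (apply pow_le, pos_INR).
  assert (0 < 2 ^ (n - 2*m)) by (apply pow_lt; lra).
  assert (0 <= INR (fact n) * / (INR (fact m) * INR (fact (n - 2 * m))))
    by (apply Rmult_le_pos; [lra| left; apply Rinv_0_lt_compat, Rmult_lt_0_compat; lra]).
  rewrite Rmult_1_l.
  replace (2 ^ n * 2 ^ n * INR n ^ m * Rabs x ^ (n - 2 * m))
    with ((2 ^ n * INR n ^ m) * 2 ^ n * Rabs x ^ (n - 2 * m)) by ring.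
  rewrite <- Rmult_assoc. apply Rmult_le_compat_r; [auto|].
  apply Rmult_le_compat; lra.
Qed.

Lemma sum_bound (f : nat -> R) (B : R) N :
  (forall m, (m <= N)%nat -> Rabs (f m) <= B) ->
  Rabs (sum_f_R0 f N) <= (INR N + 1) * B.
Proof.
  induction N as [|N IH]; intros H.
  - simpl. specialize (H 0%nat (le_n 0)). lra.
  - simpl sum_f_R0. eapply Rle_trans; [apply Rabs_triang|].
    rewrite S_INR.
    pose proof (IH (fun m Hm => H m ltac:(lia))). pose proof (H (S N) (le_n _)). lra.
Qed.

Lemma div2_le n : INR (Nat.div2 n) + 1 <= 1 + INR n / 2.
Proof.
  pose proof (Nat.div2_odd n) as E.
  assert (2 * Nat.div2 n <= n)%nat by lia.
  apply le_INR in H. rewrite mult_INR in H. simpl (INR 2) in H. lra.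
Qed.

Lemma herm_bound n x B : 0 <= B ->
  (forall m, (2 * m <= n)%nat ->
     4 ^ n * sqrt (INR n) ^ (2 * m) * Rabs x ^ (n - 2 * m) <= B) ->
  Rabs (hermite n x) <= B * (1 + INR n / 2).
Proof.
  intros HB H. unfold hermite.
  eapply Rle_trans; [apply sum_bound with (B := B)|].
  - intros m Hm. eapply Rle_trans; [apply term_le|apply H].
    + pose proof (Nat.div2_odd n); lia.
    + pose proof (Nat.div2_odd n); lia.
  - pose proof (div2_le n). rewrite Rmult_comm. apply Rmult_le_compat_l; lra.
Qed.

Lemma caseA n x : Rabs x <= sqrt 2 * sqrt (INR n) ->
  forall m, (2 * m <= n)%nat ->
     4 ^ n * sqrt (INR n) ^ (2 * m) * Rabs x ^ (n - 2 * m) <= 4 ^ n * sqrt 2 ^ n * sqrt (INR n) ^ n.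
Proof.
  intros Hx m Hm.
  set (A := sqrt (INR n)) in *. assert (0 <= A) by apply sqrt_pos.
  assert (1 <= sqrt 2) by (rewrite <- sqrt_1; apply sqrt_le_1; lra).
  assert (0 < 4 ^ n) by (apply pow_lt; lra).
  assert (Rabs x ^ (n - 2*m) <= (sqrt 2 * A) ^ (n - 2*m)) by (apply pow_incr; split; [apply Rabs_pos|exact Hx]).
  rewrite Rpow_mult_distr in H2.
  assert (sqrt 2 ^ (n - 2*m) <= sqrt 2 ^ n) by (apply Rle_pow; [lra|lia]).
  assert (0 <= A ^ (2*m)) by (apply pow_le; lra).
  assert (0 <= A ^ (n - 2*m)) by (apply pow_le; lra).
  replace (A ^ n) with (A ^ (2*m) * A ^ (n - 2*m)) by (rewrite <- pow_add; f_equal; lia).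
  rewrite !Rmult_assoc. apply Rmult_le_compat_l; [lra|].
  eapply Rle_trans. { apply Rmult_le_compat_l; [lra|exact H2]. }
  replace (A ^ (2 * m) * (sqrt 2 ^ (n - 2 * m) * A ^ (n - 2 * m)))
    with (sqrt 2 ^ (n - 2 * m) * (A ^ (2 * m) * A ^ (n - 2 * m))) by ring.
  apply Rmult_le_compat_r; [|lra]. apply Rmult_le_pos; lra.
Qed.

Lemma caseB n x : Rabs x > sqrt 2 * sqrt (INR n) ->
  forall m, (2 * m <= n)%nat ->
     4 ^ n * sqrt (INR n) ^ (2 * m) * Rabs x ^ (n - 2 * m) <= 4 ^ n * Rabs x ^ n.
Proof.
  intros Hx m Hm.
  set (A := sqrt (INR n)) in *. assert (0 <= A) by apply sqrt_pos.
  assert (1 <= sqrt 2) by (rewrite <- sqrt_1; apply sqrt_le_1; lra).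
  assert (0 < 4 ^ n) by (apply pow_lt; lra).
  assert (1 * A <= sqrt 2 * A) by (apply Rmult_le_compat_r; lra). assert (A <= Rabs x) by lra.
  assert (A ^ (2*m) <= Rabs x ^ (2*m)) by (apply pow_incr; lra).
  assert (0 <= Rabs x ^ (n - 2*m)) by (apply pow_le, Rabs_pos).
  replace (Rabs x ^ n) with (Rabs x ^ (2*m) * Rabs x ^ (n - 2*m)) by (rewrite <- pow_add; f_equal; lia).
  rewrite !Rmult_assoc. apply Rmult_le_compat_l; [lra|].
  apply Rmult_le_compat_r; lra.
Qed.

(* n^(n/2) is written (sqrt n)^n, so that 0^0 = 1 (Stdlib pow). *)
Theorem lemma4p3 (n : nat) (x : R) :
  (Rabs x <= sqrt (2 * INR n) ->
     Rabs (hermite n x) <= sqrt (INR n) ^ n * (4 * sqrt 2) ^ n * (1 + INR n / 2)) /\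
  (Rabs x > sqrt (2 * INR n) ->
     Rabs (hermite n x) <= 2 ^ (2 * n) * Rabs x ^ n * (1 + INR n / 2)) /\
  Rabs (hermite n x) <=
     4 ^ n * (1 + INR n / 2) * (sqrt 2 ^ n * sqrt (INR n) ^ n + Rabs x ^ n).
Proof.
  rewrite sqrt_mult by (lra || apply pos_INR).
  assert (E1: sqrt (INR n) ^ n * (4 * sqrt 2) ^ n = 4 ^ n * sqrt 2 ^ n * sqrt (INR n) ^ n)
    by (rewrite Rpow_mult_distr; ring).
  assert (E2: 2 ^ (2 * n) = 4 ^ n) by (rewrite pow_mult; f_equal; simpl; ring).
  rewrite E1, E2.
  assert (P0: 0 < 4 ^ n) by (apply pow_lt; lra).
  assert (P1: 0 <= sqrt 2 ^ n) by (apply pow_le, sqrt_pos).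
  assert (P2: 0 <= sqrt (INR n) ^ n) by (apply pow_le, sqrt_pos).
  assert (P3: 0 <= Rabs x ^ n) by (apply pow_le, Rabs_pos).
  assert (P4: 0 <= sqrt 2 ^ n * sqrt (INR n) ^ n) by (apply Rmult_le_pos; auto).
  assert (HA: Rabs x <= sqrt 2 * sqrt (INR n) ->
     Rabs (hermite n x) <= 4 ^ n * sqrt 2 ^ n * sqrt (INR n) ^ n * (1 + INR n / 2)).
  { intros Hx. apply herm_bound; [|apply caseA; auto].
    rewrite Rmult_assoc. apply Rmult_le_pos; lra. }
  assert (HB: Rabs x > sqrt 2 * sqrt (INR n) ->
     Rabs (hermite n x) <= 4 ^ n * Rabs x ^ n * (1 + INR n / 2)).
  { intros Hx. apply herm_bound; [apply Rmult_le_pos; lra|apply caseB; auto]. }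
  split; [exact HA|]. split; [exact HB|].
  assert (Hn: 0 <= INR n) by apply pos_INR.
  destruct (Rle_dec (Rabs x) (sqrt 2 * sqrt (INR n))) as [h|h].
  - eapply Rle_trans; [apply HA; exact h|].
    replace (4 ^ n * (1 + INR n / 2) * (sqrt 2 ^ n * sqrt (INR n) ^ n + Rabs x ^ n))
      with (4 ^ n * sqrt 2 ^ n * sqrt (INR n) ^ n * (1 + INR n / 2)
            + 4 ^ n * (1 + INR n / 2) * Rabs x ^ n) by ring.
    assert (0 <= 4 ^ n * (1 + INR n / 2) * Rabs x ^ n) by (apply Rmult_le_pos; [apply Rmult_le_pos|]; lra).
    lra.
  - eapply Rle_trans; [apply HB; lra|].
    replace (4 ^ n * (1 + INR n / 2) * (sqrt 2 ^ n * sqrt (INR n) ^ n + Rabs x ^ n))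
      with (4 ^ n * Rabs x ^ n * (1 + INR n / 2)
            + 4 ^ n * (1 + INR n / 2) * (sqrt 2 ^ n * sqrt (INR n) ^ n)) by ring.
    assert (0 <= 4 ^ n * (1 + INR n / 2) * (sqrt 2 ^ n * sqrt (INR n) ^ n)) by (apply Rmult_le_pos; [apply Rmult_le_pos|]; lra).
    lra.
Qed.
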